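(* Let $\gamma\in\mathbb C$, $k\in\{1,\dots,n\}$, and $H_k(\gamma)=I-\gamma D^k$. Then $$K_h(H_k(\gamma))=\Bigl(\frac{|\gamma|\,n!}{(n-k)!}\Bigr)^{1/k}.$$
   Context: Let $n\ge1$ and $\mathcal P_n$ the complex vector space of polynomials in one complex variable of degree at most $n$; $D$ is differentiation and $I$ the identity on $\mathcal P_n$. For nonzero $f$, $Z(f)$ is the multiset of roots of $f$ (with multiplicity; empty for nonzero constants); $Z(0)=\mathbb C$. For finite nonempty $A,B\subset\mathbb C$, $d_h(A,B)=\max_{y\in B}\min_{x\in A}|x-y|$, with conventions $d_h(\emptyset,\emptyset)=0$, $d_h(A,\emptyset)=d_h(\emptyset,A)=+\infty$ for $A\ne\emptyset$, and $d_h(A,B)=0$ if one of $A,B$ equals $\mathbb C$ and the other is nonempty. $K_h(T)=\sup_{f\in\mathcal P_n}d_h(Z(f),Z(Tf))$. *)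

(* Defs.v *)
From HB Require Import structures.
From mathcomp Require Import all_boot all_order all_algebra.
From mathcomp Require Import all_classical all_reals all_analysis.
From mathcomp.real_closed Require Import complex.
Set Implicit Arguments. Unset Strict Implicit. Unset Printing Implicit Defensive.
Import Order.TTheory GRing.Theory Num.Theory.
Local Open Scope classical_set_scope.
Local Open Scope ring_scope.

(* Z(f): the set of roots of f (multiplicities are irrelevant for d_h);
   Z(0) = C, Z(c) = empty for nonzero constants c. *)
Definition Zr (R : realType) (f : {poly R[i]}) : set R[i] := [set x | root f x].

Definition d_h (R : realType) (A B : set R[i]) : \bar R :=
  if `[< A = set0 >] && `[< B = set0 >] then 0%E
  else if `[< A = set0 >] || `[< B = set0 >] then +oo%E
  else if `[< A = setT >] || `[< B = setT >] then 0%E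
  else ereal_sup [set ereal_inf [set (Normc.normc (x - y))%:E | x in A] | y in B].

Definition K_h (R : realType) (n : nat) (T : {poly R[i]} -> {poly R[i]}) : \bar R :=
  ereal_sup [set d_h (Zr f) (Zr (T f)) | f in [set f : {poly R[i]} | (size f <= n.+1)%N]].

Definition Hk (R : realType) (k : nat) (gamma : R[i]) (f : {poly R[i]}) : {poly R[i]} :=
  f - gamma *: f^`(k).

(* Main.v *)
From HB Require Import structures.
From mathcomp Require Import all_boot all_order all_algebra.
From mathcomp Require Import all_classical all_reals all_analysis.
From mathcomp.real_closed Require Import complex.
Require Import Defs.
From mathcomp Require Import zify ring lra.
Import Order.TTheory GRing.Theory Num.Theory.
Local Open Scope ring_scope.

Section Aux.
Variable R : realType.
Local Notation C := (R[i]).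
Local Notation N := (@Normc.normc R).

Lemma N_ge0 (x : C) : 0 <= N x.
Proof. by case: x => a b; exact: sqrtr_ge0. Qed.

Lemma NX (x : C) k : N (x ^+ k) = N x ^+ k.
Proof.
elim: k => [|k IH]; first by rewrite !expr0 Normc.normc1.
by rewrite !exprS Normc.normcM IH.
Qed.

Lemma Nnat m : N (m%:R : C) = m%:R.
Proof. by rewrite normcMn Normc.normc1. Qed.

Lemma NB (x y : C) : N (x - y) = N (y - x).
Proof. by rewrite -normcN opprB. Qed.

Lemma N_gt0 (x : C) : x != 0 -> 0 < N x.
Proof.
move=> x0; rewrite lt_def N_ge0 andbT; apply/eqP => /Normc.eq0_normc.
by move/eqP: x0.
Qed.

Lemma leib (h : {poly C}) c j :
  (h * ('X - c%:P))^`(j.+1) = h^`(j.+1) * ('X - c%:P) + h^`(j) *+ j.+1.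
Proof.
elim: j => [|j IH].
  by rewrite derivn1 derivn0 derivM derivB derivX derivC subr0 mulr1.
rewrite derivnS IH derivD derivM derivB derivX derivC subr0 mulr1 derivMn.
by rewrite -!derivnS -addrA -mulrS.
Qed.

Lemma ffact_id m j : (m.+1 ^_ j.+1 = m ^_ j.+1 + j.+1 * m ^_ j)%N.
Proof.
rewrite ffactSS ffactnSr; case: (leqP j m) => [jm|mj].
  rewrite -{1}(subnKC jm) mulnC; lia.
by rewrite ffact_small // !muln0.
Qed.

Lemma factor_step (g : {poly C}) m : size g = m.+2 ->
  exists h, exists rho, [/\ g = h * ('X - rho%:P), size h = m.+1 &
     forall x, root h x -> root g x].
Proof.
move=> sg.
have : size g != 1%N by rewrite sg.
move/closed_rootP => [rho /factor_theorem [h gE]].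
exists h, rho; split => //.
- have h0 : h != 0 by apply: contraTneq isT => h0; move: sg; rewrite gE h0 mul0r size_poly0.
  by move: sg; rewrite gE size_Mmonic ?monicXsubC // size_XsubC addn2 /= => -[].
- by move=> x; rewrite gE rootM => ->.
Qed.

Lemma bound_ns m : forall (g : {poly C}), size g = m.+1 -> forall (y : C) (s : R),
  0 <= s -> (forall x, root g x -> s <= N (x - y)) ->
  forall k, N (g^`(k)).[y] * s ^+ k <= (m ^_ k)%:R * N g.[y].
Proof.
elim: m => [|m IH] g sg y s s0 hr [|k].
- by rewrite derivn0 expr0 ffactn0 mulr1 mul1r.
- rewrite derivn_poly0 ?sg // horner0 Normc.normc0 mul0r.
  by rewrite mulr_ge0 ?N_ge0.
- by rewrite derivn0 expr0 ffactn0 mulr1 mul1r.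
have [h [rho [gE sh hroot]]] := @factor_step g m sg.
have hr' x : root h x -> s <= N (x - y) by move=> /hroot /hr.
have srho : s <= N (y - rho) by rewrite NB; apply: hr; rewrite gE rootM root_XsubC eqxx orbT.
rewrite gE leib hornerD hornerMn hornerM hornerXsubC [in X in _ <= X]hornerM hornerXsubC.
rewrite ffact_id natrD natrM.
apply: (le_trans (ler_wpM2r (exprn_ge0 _ s0) (le_normcD _ _))).
rewrite Normc.normcM normcMn mulrDl.
rewrite mulrDl Normc.normcM; apply: lerD.
  rewrite mulrAC mulrA; apply: ler_wpM2r; first exact: N_ge0.
  exact: IH.
rewrite exprSr -[_ *+ k.+1]mulr_natl -!mulrA; apply: ler_wpM2l; first exact: ler0n.
rewrite mulrA [X in _ <= X]mulrA; apply: ler_pM => //.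
- by rewrite mulr_ge0 ?N_ge0 ?exprn_ge0.
- exact: IH.
Qed.

Lemma bound_s m (g : {poly C}) : size g = m.+1 -> forall (y : C) (s : R),
  0 <= s -> (forall x, root g x -> s < N (x - y)) ->
  forall k, (0 < k <= m)%N -> N (g^`(k)).[y] * s ^+ k < (m ^_ k)%:R * N g.[y].
Proof.
case: m => [|m] sg y s s0 hr [|k] // km.
have [h [rho [gE sh hroot]]] := @factor_step g m sg.
have hr' x : root h x -> s <= N (x - y) by move=> /hroot /hr /ltW.
have srho : s < N (y - rho) by rewrite NB; apply: hr; rewrite gE rootM root_XsubC eqxx orbT.
have hy : 0 < N h.[y].
  apply: N_gt0; apply/negP => /hroot /hr; rewrite subrr Normc.normc0.
  by rewrite ltNge s0.
rewrite gE leib hornerD hornerMn hornerM hornerXsubC [in X in _ < X]hornerM hornerXsubC.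
rewrite ffact_id natrD natrM.
apply: (le_lt_trans (ler_wpM2r (exprn_ge0 _ s0) (le_normcD _ _))).
rewrite Normc.normcM normcMn mulrDl.
rewrite mulrDl Normc.normcM; apply: ler_ltD.
  rewrite mulrAC mulrA; apply: ler_wpM2r; first exact: N_ge0.
  exact: bound_ns.
rewrite exprSr -[_ *+ k.+1]mulr_natl -!mulrA ltr_pM2l ?ltr0n //.
rewrite mulrA [X in _ < X]mulrA.
apply: (le_lt_trans (ler_wpM2r s0 (@bound_ns m h sh y s s0 hr' k))).
rewrite ltr_pM2l //.
by rewrite mulr_gt0 // ltr0n ffact_gt0.
Qed.

Lemma size_derivn_le (p : {poly C}) j : (size p^`(j) <= size p)%N.
Proof.
elim: j => [|j IH]; first by rewrite derivn0.
rewrite derivnS; case: (eqVneq p^`(j) 0) => [->|nz]; first by rewrite deriv0 size_poly0.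
exact: leq_trans (ltnW (lt_size_deriv nz)) IH.
Qed.

Lemma size_Hk k (g : C) (f : {poly C}) : (0 < k)%N -> size (Hk k g f) = size f.
Proof.
move=> k0; case: (eqVneq f 0) => [->|f0].
  rewrite /Hk; have -> : (0 : {poly C})^`(k) = 0 by apply: derivn_poly0; rewrite size_poly0.
  by rewrite /Hk scaler0 subr0.
rewrite /Hk size_addl // size_opp.
apply: leq_ltn_trans (size_scale_leq _ _) _.
case: k k0 => // k _; rewrite derivSn.
case: (eqVneq f^`() 0) => [->|nz].
  by rewrite derivn_poly0 ?size_poly0 ?size_poly_gt0.
exact: leq_ltn_trans (size_derivn_le _ _) (lt_size_deriv f0).
Qed.

Lemma ffact_mono m n k : (m <= n)%N -> (m ^_ k <= n ^_ k)%N.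
Proof. by move=> mn; rewrite -!bin_ffact leq_mul2r leq_bin2l ?orbT. Qed.

Lemma close n k (g : C) (r : R) : (0 < k)%N -> 0 <= r ->
  r ^+ k = N g * (n ^_ k)%:R -> forall f : {poly C}, (size f <= n.+1)%N ->
  forall y, root (Hk k g f) y -> exists2 x, root f x & N (x - y) <= r.
Proof.
move=> k0 r0 rk f sf y.
case: (eqVneq f 0) => [->|f0] hy.
  by exists y; rewrite ?root0 // subrr Normc.normc0.
case: (pselect (exists2 x, root f x & N (x - y) <= r)) => // H; exfalso.
have hr x : root f x -> r < N (x - y).
  move=> rx; rewrite ltNge; apply/negP => le; apply: H; exists x => //.
have fy : f.[y] != 0.
  apply/negP => /eqP fy0; have := hr y; rewrite /root fy0 eqxx subrr Normc.normc0.
  by move=> /(_ isT); rewrite ltNge r0.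
move: hy; rewrite /Hk rootE hornerD hornerN hornerZ subr_eq0 => /eqP E.
have sfE : size f = (size f).-1.+1 by rewrite prednK // size_poly_gt0.
case: (leqP k (size f).-1) => km; last first.
  by move: fy; rewrite E derivn_poly0 ?horner0 ?mulr0 ?eqxx // sfE.
have g0 : g != 0 by apply: contraNneq fy => g0; rewrite E g0 mul0r.
have := @bound_s _ f sfE y r r0 hr k; rewrite k0 km => /(_ isT) lt.
have NE : N f.[y] = N g * N (f^`(k)).[y] by rewrite {1}E Normc.normcM.
have : N f.[y] * r ^+ k < r ^+ k * N f.[y].
  rewrite {1}NE -mulrA.
  apply: (@lt_le_trans _ _ (N g * (((size f).-1 ^_ k)%:R * N f.[y]))).
    by rewrite ltr_pM2l ?N_gt0.
  rewrite rk -mulrA; apply: ler_wpM2l; first exact: N_ge0.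
  apply: ler_wpM2r; first exact: N_ge0.
  rewrite ler_nat; apply: ffact_mono; rewrite -ltnS -sfE //.
by rewrite mulrC ltxx.
Qed.

Lemma Zr_empty (p : {poly C}) : Zr p = set0 <-> size p = 1%N.
Proof.
split.
- move=> E; apply/eqP; apply: contraT => /closed_rootP [x rx].
  have : Zr p x by [].
  by rewrite E.
- move=> s1; apply/seteqP; split => x //=; rewrite /Zr /= => rx.
  have := introT (closed_rootP p) (ex_intro _ x rx).
  by rewrite s1.
Qed.

Lemma nonroot (p : {poly C}) : p != 0 -> exists x, ~~ root p x.
Proof.
move=> p0; case: (pselect (exists x, ~~ root p x)) => // H; exfalso.
set rs := [seq (i%:R : C) | i <- iota 0 (size p)].
have allr : all (root p) rs.
  apply/allP => x _; apply/negPn/negP => nr; apply: H; exists x.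
  exact: nr.
have ur : uniq rs.
  rewrite map_inj_uniq ?iota_uniq // => a b /eqP; rewrite eqr_nat => /eqP.
  done.
have := max_poly_roots p0 allr ur.
by rewrite size_map size_iota ltnn.
Qed.

Lemma d_h_le (A B : set C) (r : R) : 0 <= r -> (A = set0 <-> B = set0) ->
  (forall y, B y -> exists2 x, A x & N (x - y) <= r) -> (d_h A B <= r%:E)%E.
Proof.
move=> r0 iff H; rewrite /d_h.
case: (asboolP (A = set0)) => hA; case: (asboolP (B = set0)) => hB /=.
- by rewrite lee_fin.
- by exfalso; apply: hB; apply iff.
- by exfalso; apply: hA; apply iff.
case: ifP => _; first by rewrite lee_fin.
apply: ge_ereal_sup => e [y By <-].
apply: ge_ereal_inf.
have [x Ax le] := H y By.
by exists (N (x - y))%:E; [exists x | rewrite lee_fin].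
Qed.

Lemma d_h_ge (A B : set C) (r : R) (w : C) : A <> set0 -> A <> setT -> B <> setT ->
  B w -> (forall x, A x -> r <= N (x - w)) -> (r%:E <= d_h A B)%E.
Proof.
move=> hA hAT hBT Bw H; rewrite /d_h.
have hB : B <> set0 by move=> E; rewrite E in Bw.
case: (asboolP (A = set0)) => // _; case: (asboolP (B = set0)) => // _ /=.
case: (asboolP (A = setT)) => // _; case: (asboolP (B = setT)) => // _ /=.
apply: ereal_sup_ge.
exists (ereal_inf [set (N (x - w))%:E | x in A]); first by exists w.
apply: le_ereal_inf_tmp => e [x Ax <-].
by rewrite lee_fin; apply: H.
Qed.
End Aux.

Theorem mainTheorem16 (R : realType) (n : nat) (gamma : R[i]) (k : nat) :
  (1 <= n)%N -> (1 <= k)%N -> (k <= n)%N ->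
  K_h n (Hk k gamma) =
  (powR (Normc.normc gamma * n`!%:R / (n - k)`!%:R) (k%:R^-1))%:E.
Proof.
move=> n1 k1 kn.
have fE : (n`!%:R / (n - k)`!%:R : R) = (n ^_ k)%:R.
  by rewrite -(ffact_fact kn) natrM mulfK // pnatr_eq0 -lt0n fact_gt0.
rewrite -mulrA fE.
set c := Normc.normc gamma * (n ^_ k)%:R.
set r := powR c k%:R^-1.
have c0 : 0 <= c by rewrite mulr_ge0 ?N_ge0 ?ler0n.
have r0 : 0 <= r by apply: powR_ge0.
have rk : r ^+ k = c.
  rewrite /r -powR_mulrn ?powR_ge0 // -powRrM mulVf ?pnatr_eq0 -?lt0n // powRr1 //.
apply/le_anti/andP; split.
- apply: ge_ereal_sup => e [f sf <-]; apply: d_h_le => //.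
  + split => /Zr_empty H; apply/Zr_empty.
    * by rewrite size_Hk.
    * by rewrite size_Hk in H.
  + by move=> y; apply: close rk f sf y.
apply: ereal_sup_ge.
exists (d_h (Zr 'X^n) (Zr (Hk k gamma 'X^n))).
  by exists 'X^n => //; rewrite /= size_polyXn.
set c' : R[i] := gamma * (n ^_ k)%:R.
set w := k.-root c'.
have hw : w ^+ k = c' by rewrite /w rootCK.
apply: (@d_h_ge R _ _ r w).
- move=> /Zr_empty; rewrite size_polyXn => -[] n0; by rewrite n0 in n1.
- move=> E; have : Zr (R:=R) 'X^n 1 by rewrite E.
  by rewrite /Zr /= rootE hornerXn expr1n oner_eq0.
- move=> E; have Hnz : Hk k gamma 'X^n != 0.
    by rewrite -size_poly_eq0 size_Hk // size_polyXn.
  have [x nx] := @nonroot R _ Hnz.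
  have : Zr (Hk k gamma 'X^n) x by rewrite E.
  by rewrite /Zr /= (negbTE nx).
- rewrite /Zr /= rootE /Hk hornerD hornerN hornerZ derivnXn hornerMn hornerXn.
  have -> : w ^+ n = w ^+ (n - k) * w ^+ k by rewrite -exprD subnK.
  rewrite hw /c' hornerXn -[_ *+ n ^_ k]mulr_natr; apply/eqP; ring.
move=> x; rewrite /Zr /= rootE hornerXn expf_eq0 => /andP[_ /eqP ->].
rewrite sub0r normcN.
have -> : Normc.normc w = r.
  apply: (pexpIrn k1); rewrite ?inE ?nnegrE ?N_ge0 //.
  by rewrite /= -NX hw /c' Normc.normcM Nnat rk.
by [].
Qed.
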